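(* With the system $T = D_T\cup A\cup B$ defined below, both $T\setminus B = D_T\cup A$ and $T\setminus D_T = A\cup B$ are terminating.
   Context: A string rewriting system (SRS) $R$ over an alphabet $\Sigma$ is a set of pairs $\ell\to r$ of strings; it induces the rewrite relation $u\ell v\to_R urv$ ($u,v\in\Sigma^*$). $R$ is terminating if there is no infinite sequence $s_0\to_R s_1\to_R\cdots$. Alphabet: $\{0_2,1_2,0_3,1_3,2_3,\lhd,\rhd\}$ (formal symbols). $D_T=\{0_2\rhd\to\rhd,\ 1_2\rhd\to 2_3\rhd\}$; $A=\{0_20_3\to0_30_2,\ 0_21_3\to0_31_2,\ 0_22_3\to1_30_2,\ 1_20_3\to1_31_2,\ 1_21_3\to2_30_2,\ 1_22_3\to2_31_2\}$; $B=\{\lhd0_3\to\lhd1_2,\ \lhd1_3\to\lhd0_20_2,\ \lhd2_3\to\lhd0_21_2\}$; $T=D_T\cup A\cup B$. *)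

(* Defs.v *)
From Stdlib Require Import List.
Import ListNotations.

Inductive sym : Type :=
| z2
| o2
| z3
| o3
| t3
| lft  (* left end marker  \lhd *)
| rgt. (* right end marker \rhd *)

Definition word := list sym.

Definition srs := word -> word -> Prop.

Definition rewrite_step (R : srs) (s t : word) : Prop :=
  exists u v l r, R l r /\ s = u ++ l ++ v /\ t = u ++ r ++ v.

Definition terminating (R : srs) : Prop :=
  ~ exists f : nat -> word, forall n, rewrite_step R (f n) (f (S n)).

Definition rules_of (L : list (word * word)) : srs :=
  fun l r => In (l, r) L.

Definition D_T : list (word * word) :=
  [ ([z2; rgt], [rgt]);
    ([o2; rgt], [t3; rgt]) ].

Definition A_rules : list (word * word) :=
  [ ([z2; z3], [z3; z2]);
    ([z2; o3], [z3; o2]);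
    ([z2; t3], [o3; z2]);
    ([o2; z3], [o3; o2]);
    ([o2; o3], [t3; z2]);
    ([o2; t3], [t3; o2]) ].

Definition B_rules : list (word * word) :=
  [ ([lft; z3], [lft; o2]);
    ([lft; o3], [lft; z2; z2]);
    ([lft; t3], [lft; z2; o2]) ].

Definition srs_union (R S : srs) : srs := fun l r => R l r \/ S l r.

Definition T_rules : srs :=
  srs_union (rules_of D_T) (srs_union (rules_of A_rules) (rules_of B_rules)).

Definition srs_minus (R S : srs) : srs := fun l r => R l r /\ ~ S l r.

(* Main.v *)
Require Import Defs.
From Stdlib Require Import List Lia Arith.
Import ListNotations.

Lemma term_by_measure (R : srs) (m : word -> nat) :
  (forall s t, rewrite_step R s t -> m t < m s) -> terminating R.
Proof.
  intros H [f Hf].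
  assert (forall n, m (f n) + n <= m (f 0)).
  { induction n. lia. specialize (H _ _ (Hf n)). lia. }
  specialize (H0 (S (m (f 0)))). lia.
Qed.

Definition I1 (a : sym) (v : nat) : nat :=
  match a with
  | z2 | o2 => 2*v+1
  | _ => v+1
  end.
Fixpoint ev1 (w : word) (v : nat) : nat :=
  match w with [] => v | a :: w' => I1 a (ev1 w' v) end.
Lemma ev1_mono w a b : a < b -> ev1 w a < ev1 w b.
Proof. induction w as [|c w IH]; simpl; auto. intros; specialize (IH H); destruct c; simpl; lia. Qed.
Lemma ev1_app w1 w2 v : ev1 (w1 ++ w2) v = ev1 w1 (ev1 w2 v).
Proof. induction w1; simpl; congruence. Qed.

Definition I2 (a : sym) (v : nat) : nat :=
  match a with
  | z3 | o3 | t3 => 2*v+3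
  | _ => v+1
  end.
Fixpoint ev2 (w : word) (v : nat) : nat :=
  match w with [] => v | a :: w' => ev2 w' (I2 a v) end.
Lemma ev2_mono w a b : a < b -> ev2 w a < ev2 w b.
Proof. revert a b; induction w as [|c w IH]; simpl; auto. intros; apply IH; destruct c; simpl; lia. Qed.
Lemma ev2_app w1 w2 v : ev2 (w1 ++ w2) v = ev2 w2 (ev2 w1 v).
Proof. revert v; induction w1; simpl; auto. Qed.

Theorem mainTheorem4 :
  terminating (srs_minus T_rules (rules_of B_rules)) /\
  terminating (srs_minus T_rules (rules_of D_T)).
Proof.
  split.
  - apply (term_by_measure _ (fun w => ev1 w 0)).
    intros s t (u & v & l & r & [HT HB] & -> & ->).
    rewrite !ev1_app. apply ev1_mono.
    assert (Hv : 0 <= ev1 v 0) by lia. revert Hv. generalize (ev1 v 0) as x.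
    unfold T_rules, srs_union, rules_of, B_rules, D_T, A_rules in *; simpl in *.
    intros x _.
    destruct HT as [H|[H|H]]; repeat destruct H as [H|H]; try contradiction;
      inversion H; subst; simpl; try tauto; lia.
  - apply (term_by_measure _ (fun w => ev2 w 0)).
    intros s t (u & v & l & r & [HT HB] & -> & ->).
    rewrite !ev2_app. apply ev2_mono.
    generalize (ev2 u 0) as x.
    unfold T_rules, srs_union, rules_of, B_rules, D_T, A_rules in *; simpl in *.
    intros x.
    destruct HT as [H|[H|H]]; repeat destruct H as [H|H]; try contradiction;
      inversion H; subst; simpl; try tauto; lia.
Qed.
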